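(* Let $k\ge1$, $G=(V,E)$ an inductively $k$-independent graph with $k$-independence ordering $v_1,\dots,v_n$, $f:2^V\to\mathbb{R}_{\ge0}$ monotone submodular with $f(\emptyset)=0$, and $\beta>0$. Run algorithm PREEMPTIVE-GREEDY (described in the context), let $S_{\mathrm{out}}$ be its output and $U$ the set of all vertices ever contained in $S$ during the run. Then for every independent set $T$ of $G$, \[ f(U\cup T)-f(U)\le k(1+\beta)(1+\beta^{-1})\,f(S_{\mathrm{out}}). \]
   Context: $N(v)$ is the neighbourhood of $v$ (excluding $v$); $G$ is inductively $k$-independent with $k$-independence ordering $v_1,\dots,v_n$ if for every $i$, $G[N(v_i)\cap\{v_i,\dots,v_n\}]$ has no independent set of size more than $k$. Order $V$ by $v_1<\dots<v_n$. For $S\subseteq V$: $f_S(v)=f(S\cup\{v\})-f(S)$, and $\nu_f(S,u)=f_{S'}(u)$ where $S'=\{s\in S:s<u\}$. Algorithm PREEMPTIVE-GREEDY (parameter $\beta>0$): start with $S=\emptyset$; for $i=1,\dots,n$: let $C_i=N(v_i)\cap S$; if $f_S(v_i)\ge(1+\beta)\sum_{u\in C_i}\nu_f(S,u)$, replace $S$ by $(S\setminus C_i)\cup\{v_i\}$. Return the final $S$ as $S_{\mathrm{out}}$. *)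

(* Defs.v *)
From mathcomp Require Import all_boot all_order all_algebra.
Set Implicit Arguments. Unset Strict Implicit. Unset Printing Implicit Defensive.
Import Order.TTheory GRing.Theory Num.Theory.
Local Open Scope ring_scope.

Section PG.
Variables (T : finType) (R : realFieldType).

Definition simple_graph (e : rel T) := symmetric e /\ irreflexive e.

Definition nbhd (e : rel T) (v : T) : {set T} := [set u | e v u].

Definition independent (e : rel T) (I : {set T}) :=
  forall x y, x \in I -> y \in I -> ~~ e x y.

(* an ordering v_1, ..., v_n of V is a duplicate-free enumeration s of T;
   x < y in the ordering iff index x s < index y s *)
Definition vertex_ordering (s : seq T) := uniq s /\ forall x, x \in s.

Definition later (s : seq T) (v : T) : {set T} :=
  [set u | (index v s <= index u s)%N].

Definition inductively_k_independent (e : rel T) (k : nat) (s : seq T) :=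
  forall v, forall I : {set T},
    I \subset nbhd e v :&: later s v -> independent e I -> (#|I| <= k)%N.

Definition monotone (f : {set T} -> R) :=
  forall A B : {set T}, A \subset B -> f A <= f B.
Definition submodular (f : {set T} -> R) :=
  forall A B : {set T}, f (A :|: B) + f (A :&: B) <= f A + f B.
Definition nonneg (f : {set T} -> R) := forall A, 0 <= f A.

Definition marg (f : {set T} -> R) (S : {set T}) (v : T) := f (v |: S) - f S.

Definition nu (f : {set T} -> R) (s : seq T) (S : {set T}) (u : T) :=
  marg f [set x in S | (index x s < index u s)%N] u.

(* one iteration; the state is (S, U) where U accumulates every vertex
   that has ever been in S *)
Definition pg_step (e : rel T) (f : {set T} -> R) (s : seq T) (beta : R)
    (st : {set T} * {set T}) (v : T) : {set T} * {set T} :=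
  let: (S0, U0) := st in
  let C := nbhd e v :&: S0 in
  if (1 + beta) * (\sum_(u in C) nu f s S0 u) <= marg f S0 v
  then ((S0 :\: C) :|: [set v], v |: U0)
  else (S0, U0).

Definition pg_run e f s beta : {set T} * {set T} :=
  foldl (pg_step e f s beta) (set0, set0) s.

Definition pg_out e f s beta := (pg_run e f s beta).1.
Definition pg_U e f s beta := (pg_run e f s beta).2.

End PG.

(* Main.v *)
Require Import Defs.
From mathcomp Require Import all_boot all_order all_algebra.
From mathcomp Require Import lra ring.
Import Order.TTheory GRing.Theory Num.Theory.
Local Open Scope ring_scope.

Lemma idx_inj (V : finType) (s : seq V) : (forall x, x \in s) ->
  forall x y, index x s = index y s -> x = y.
Proof. by move=> hall x y H; rewrite -(nth_index x (hall x)) H nth_index. Qed.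

Lemma dimret (R : realFieldType) (V : finType) (f : {set V} -> R) :
  monotone f -> submodular f -> forall (A B : {set V}) v,
  A \subset B -> marg f B v <= marg f A v.
Proof.
move=> hm hs A B v hAB; rewrite /marg.
case: (boolP (v \in B)) => vB.
  have -> : v |: B = B by apply/setUidPr; rewrite sub1set.
  rewrite subrr subr_ge0; apply: hm; exact: subsetUr.
have := hs (v |: A) B.
have -> : (v |: A) :|: B = v |: B.
  by rewrite -setUA (setUidPr hAB).
have -> : (v |: A) :&: B = A.
  rewrite setIUl (setIidPl hAB).
  have -> : [set v] :&: B = set0.
    apply/setP => x; rewrite !inE; apply/negbTE/andP => -[/eqP -> ]; by rewrite (negbTE vB).
  by rewrite set0U.
move=> H; lra.
Qed.

Lemma telesc (R : realFieldType) (V : finType) (f : {set V} -> R) s :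
  (forall x, x \in s) -> f set0 = 0 ->
  forall S, f S = \sum_(u in S) nu f s S u.
Proof.
move=> hall f0 S; have [n] := ubnP #|S|; elim: n S => [|n IH] S // hS.
case: (set_0Vmem S) => [->|[x0 x0S]]; first by rewrite big_set0.
set m := [arg max_(x > x0 in S) index x s].
have [mS mmax] : m \in S /\ forall y, y \in S -> (index y s <= index m s)%N.
  by rewrite /m; case: arg_maxnP => // z zS H; split.
rewrite (big_setD1 m mS) /=.
have -> : nu f s S m = f S - f (S :\ m).
  rewrite /nu /marg.
  have -> : [set x in S | (index x s < index m s)%N] = S :\ m.
    apply/setP => x; rewrite !inE; case xS: (x \in S); rewrite ?andbF //= andbT.
    case: (eqVneq x m) => [->|xm]; first by rewrite ltnn.
    rewrite ltn_neqAle mmax // andbT; apply/eqP => /(@idx_inj _ _ hall) /eqP.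
    by rewrite (negbTE xm).
  by rewrite setD1K.
have -> : \sum_(i in S :\ m) nu f s S i = \sum_(i in S :\ m) nu f s (S :\ m) i.
  apply: eq_bigr => u; rewrite !inE => /andP [um uS]; rewrite /nu; congr marg.
  apply/setP => x; rewrite !inE; case: (eqVneq x m) => [->|] //=.
  by rewrite mS /= ltnNge mmax.
rewrite -IH; first by lra.
by move: hS; rewrite (cardsD1 m S) mS.
Qed.

Lemma Lrem (R : realFieldType) (V : finType) (f : {set V} -> R) s :
  monotone f -> submodular f ->
  forall X C : {set V}, C \subset X -> f X - f (X :\: C) <=
    \sum_(u in C) marg f [set x in X | (index x s < index u s)%N] u.
Proof.
move=> hm hs X C; have [n] := ubnP #|C|; elim: n C => [|n IH] C // hC CX.
case: (set_0Vmem C) => [->|[x0 x0C]]; first by rewrite big_set0 setD0 subrr.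
set m := [arg min_(x < x0 in C) index x s].
have [mC mmin] : m \in C /\ forall y, y \in C -> (index m s <= index y s)%N.
  by rewrite /m; case: arg_minnP => // z zC H; split.
have mX : m \in X by apply: (subsetP CX).
have e1 : X :\: (C :\ m) = m |: (X :\: C).
  apply/setP => x; rewrite !inE; case: (eqVneq x m) => [->|] //=; rewrite ?mX ?andbT //.
have -> : f X - f (X :\: C) = (f X - f (X :\: (C :\ m))) + marg f (X :\: C) m.
  by rewrite /marg -e1; lra.
rewrite (big_setD1 m mC) /= addrC; apply: lerD.
  apply: IH; last by apply: subset_trans CX; apply: subsetDl.
  by move: hC; rewrite (cardsD1 m C) mC.
apply: dimret => //; apply/subsetP => x; rewrite !inE => /andP [xX xm].
rewrite xX andbT; apply/negP => xC; move: (mmin x xC); by rewrite leqNgt xm.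
Qed.

Lemma subadd (R : realFieldType) (V : finType) (f : {set V} -> R) :
  monotone f -> submodular f ->
  forall U A : {set V}, f (U :|: A) - f U <= \sum_(t in A) marg f U t.
Proof.
move=> hm hs U A; have [n] := ubnP #|A|; elim: n A => [|n IH] A // hA.
case: (set_0Vmem A) => [->|[t tA]]; first by rewrite big_set0 setU0 subrr.
rewrite (big_setD1 t tA) /=.
have e1 : U :|: A = t |: (U :|: (A :\ t)).
  by rewrite setUCA setD1K.
have -> : f (U :|: A) - f U = marg f (U :|: (A :\ t)) t + (f (U :|: (A :\ t)) - f U).
  by rewrite /marg -e1; lra.
apply: lerD; first by apply: dimret => //; apply: subsetUl.
by apply: IH; move: hA; rewrite (cardsD1 t A) tA.
Qed.
Set Implicit Arguments. Unset Strict Implicit.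

Definition Pre (V : finType) (s : seq V) (i : nat) : {set V} :=
  [set x | (index x s < i)%N].

Definition Inv (R : realFieldType) (V : finType) (e : rel V) (f : {set V} -> R)
  (s : seq V) (beta : R) (k : nat) (Tset : {set V}) (i : nat)
  (st : {set V} * {set V}) (Tc : V -> {set V}) (D : R) : Prop :=
  [/\ st.1 \subset st.2, st.2 \subset Pre s i,
      (forall u, Tc u \subset Tset :&: nbhd e u :&: later s u :&: Pre s i),
      beta * D <= f st.1 &
      \sum_(t in (Tset :&: Pre s i) :\: st.2) marg f st.2 t <=
        (1 + beta) * (k%:R * D + \sum_(u in st.1) #|Tc u|%:R * nu f s st.1 u)].

Lemma marg_ge0 (R : realFieldType) (V : finType) (f : {set V} -> R) :
  monotone f -> forall A v, 0 <= marg f A v.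
Proof. by move=> hm A v; rewrite /marg subr_ge0; apply: hm; apply: subsetUr. Qed.

Lemma step_inv (R : realFieldType) (V : finType) (e : rel V) (f : {set V} -> R)
  (s : seq V) (beta : R) (k : nat) (Tset : {set V}) :
  (forall x, x \in s) -> symmetric e ->
  inductively_k_independent e k s -> independent e Tset ->
  monotone f -> submodular f -> 0 < beta ->
  forall i v S U Tc D, index v s = i -> Inv e f s beta k Tset i (S, U) Tc D ->
  exists Tc' D', Inv e f s beta k Tset i.+1 (pg_step e f s beta (S, U) v) Tc' D'.
Proof.
move=> hall hsym hk hT hm hs hb i v S U Tc D iv [/= SU UP TcP hD hQ].
have vP : v \notin Pre s i by rewrite inE iv ltnn.
have Pe : Pre s i.+1 = v |: Pre s i.
  apply/setP => x; rewrite !inE ltnS leq_eqVlt; case: (eqVneq x v) => [->|xv].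
    by rewrite iv eqxx.
  congr orb; apply/negbTE/eqP => hx; move/eqP: xv; apply.
  by apply: (@idx_inj _ _ hall); rewrite hx iv.
have PP : Pre s i \subset Pre s i.+1 by rewrite Pe subsetUr.
have vU : v \notin U by apply/negP => /(subsetP UP); apply/negP.
have vS : v \notin S by apply/negP => /(subsetP SU); apply/negP.
have idxS : forall u, u \in S -> (index u s < i)%N.
  by move=> u /(subsetP SU) /(subsetP UP); rewrite inE.
have cle : forall u, (#|Tc u| <= k)%N.
  move=> u; apply: (hk u); last first.
    by move=> x y /(subsetP (TcP u)) /setIP [/setIP [/setIP [xT _] _] _]
                  /(subsetP (TcP u)) /setIP [/setIP [/setIP [yT _] _] _]; apply: hT.
  apply: subset_trans (TcP u) _; apply/subsetP => x; rewrite !inE.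
  by case/andP => /andP [/andP [_ ->] ->].
have nu0 : forall A u, 0 <= nu f s A u by move=> A u; apply: marg_ge0.
rewrite /pg_step; set C := nbhd e v :&: S.
have CS : C \subset S by apply: subsetIr.
have vC : v \notin C by rewrite inE (negbTE vS) andbF.
have SC : S :&: C = C by apply/setIidPr.
case: ifP => hacc.
- exists Tc, (D + \sum_(u in C) nu f s S u); split => /=.
  + apply/subsetP => x; rewrite !inE => /orP [/andP [_ xS]|->].
      by rewrite (subsetP SU _ xS) orbT.
    by [].
  + by rewrite Pe; apply: setUS.
  + by move=> u; apply: subset_trans (TcP u) _; apply: setIS.
  + have hL := @Lrem _ _ f s hm hs (v |: S) C.
    have CX : C \subset v |: S by apply: subset_trans CS (subsetUr _ _).
    move: (hL CX).
    have -> : (v |: S) :\: C = S :\: C :|: [set v].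
      apply/setP => x; rewrite in_setD !in_setU !in_set1; case: (eqVneq x v) => [->|] /=.
        by rewrite (negbTE vC) orbT.
      by move=> _; rewrite orbF in_setD.
    have -> : \sum_(u in C) marg f [set x in v |: S | (index x s < index u s)%N] u
            = \sum_(u in C) nu f s S u.
      apply: eq_bigr => u uC; rewrite /nu; congr marg; apply/setP => x.
      rewrite !inE; case: (eqVneq x v) => [->|] //=.
      rewrite (negbTE vS) iv /=; apply/negbTE; rewrite -leqNgt; apply: ltnW; apply: idxS.
      exact: (subsetP CS).
    move: hacc; rewrite /marg => hacc hL2.
    set Sg := \sum_(u in C) nu f s S u in hacc hL2 *.
    rewrite mulrDr; nra.
  + have -> : (Tset :&: Pre s i.+1) :\: (v |: U) = (Tset :&: Pre s i) :\: U.
      apply/setP => x; rewrite Pe; case: (eqVneq x v) => [->|xv].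
        by rewrite !inE eqxx iv ltnn /= !andbF.
      by rewrite !inE (negbTE xv).
    have H0 : \sum_(t in (Tset :&: Pre s i) :\: U) marg f (v |: U) t <=
              \sum_(t in (Tset :&: Pre s i) :\: U) marg f U t.
      by apply: ler_sum => t _; apply: dimret => //; apply: subsetUr.
    apply: le_trans H0 _; apply: le_trans hQ _; apply: ler_wpM2l; first by lra.
    set S' := S :\: C :|: [set v].
    have E1 : \sum_(u in S) #|Tc u|%:R * nu f s S u =
       \sum_(u in C) #|Tc u|%:R * nu f s S u + \sum_(u in S :\: C) #|Tc u|%:R * nu f s S u.
      by rewrite (big_setID C) SC.
    have vSC : v \notin S :\: C by rewrite in_setD (negbTE vS) andbF.
    have E2 : \sum_(u in S') #|Tc u|%:R * nu f s S' u =
       #|Tc v|%:R * nu f s S' v + \sum_(u in S :\: C) #|Tc u|%:R * nu f s S' u.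
      by rewrite /S' setUC big_setU1.
    have H1 : \sum_(u in C) #|Tc u|%:R * nu f s S u <= k%:R * \sum_(u in C) nu f s S u.
      rewrite mulr_sumr; apply: ler_sum => u _; apply: ler_wpM2r; first exact: nu0.
      by rewrite ler_nat.
    have H2 : \sum_(u in S :\: C) #|Tc u|%:R * nu f s S u <=
              \sum_(u in S :\: C) #|Tc u|%:R * nu f s S' u.
      apply: ler_sum => u; rewrite in_setD => /andP [_ uS].
      apply: ler_wpM2l; first exact: ler0n.
      apply: dimret => //; apply/subsetP => x; rewrite !inE.
      case: (eqVneq x v) => [->|xv] /=.
        rewrite iv => /andP [_ h]; move: (idxS u uS); rewrite ltnNge (ltnW h) //.
      by rewrite orbF => /andP [/andP [_ ->] ->].
    have H3 : 0 <= #|Tc v|%:R * nu f s S' v by apply: mulr_ge0; [exact: ler0n|exact: nu0].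
    rewrite E1 E2 mulrDr; lra.
- have PU : U \subset Pre s i.+1 by apply: subset_trans UP PP.
  have TcP' : forall u, Tc u \subset Tset :&: nbhd e u :&: later s u :&: Pre s i.+1.
    by move=> u; apply: subset_trans (TcP u) _; apply: setIS.
  case vT: (v \in Tset); last first.
    exists Tc, D; split => //=.
    have -> : (Tset :&: Pre s i.+1) :\: U = (Tset :&: Pre s i) :\: U.
      apply/setP => x; rewrite Pe; case: (eqVneq x v) => [->|xv].
        by rewrite !inE vT.
      by rewrite !inE (negbTE xv).
    exact: hQ.
  exists (fun u => if u \in C then v |: Tc u else Tc u), D; split => //=.
  + move=> u; case: ifP => uC; last exact: TcP'.
    have uS : u \in S by apply: (subsetP CS).
    apply/subsetP => x; rewrite in_setU1 => /orP [/eqP ->|xT].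
      move: uC; rewrite !inE vT iv ltnSn (ltnW (idxS u uS)) hsym /=.
      by case/andP => -> _.
    exact: (subsetP (TcP' u)).
  + have -> : (Tset :&: Pre s i.+1) :\: U = v |: ((Tset :&: Pre s i) :\: U).
      apply/setP => x; rewrite Pe; case: (eqVneq x v) => [->|xv].
        by rewrite !inE vT eqxx (negbTE vU).
      by rewrite !inE (negbTE xv).
    have vO : v \notin (Tset :&: Pre s i) :\: U by rewrite !inE iv ltnn !andbF.
    rewrite big_setU1 //=.
    have E1 : \sum_(u in S) #|if u \in C then v |: Tc u else Tc u|%:R * nu f s S u =
       \sum_(u in C) #|Tc u|%:R * nu f s S u + \sum_(u in C) nu f s S u
        + \sum_(u in S :\: C) #|Tc u|%:R * nu f s S u.
      rewrite (big_setID C) SC /= -big_split /=; congr (_ + _).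
        apply: eq_bigr => u uC; rewrite uC cardsU1.
        have -> : v \notin Tc u.
          apply/negP => /(subsetP (TcP u)); rewrite !inE iv ltnn; by rewrite !andbF.
        by rewrite /= natrD mulrDl mul1r addrC.
      by apply: eq_bigr => u /setDP [_ /negbTE ->].
    have E0 : \sum_(u in S) #|Tc u|%:R * nu f s S u =
       \sum_(u in C) #|Tc u|%:R * nu f s S u + \sum_(u in S :\: C) #|Tc u|%:R * nu f s S u.
      by rewrite (big_setID C) SC.
    rewrite E1; rewrite E0 in hQ.
    have H0 : marg f U v <= marg f S v by apply: dimret.
    move/negbT: hacc; rewrite -ltNge => hacc.
    rewrite !mulrDr in hQ hacc *; lra.
Qed.

Lemma run_inv (R : realFieldType) (V : finType) (e : rel V) (f : {set V} -> R)
  (s : seq V) (beta : R) (k : nat) (Tset : {set V}) :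
  uniq s -> (forall x, x \in s) -> symmetric e ->
  inductively_k_independent e k s -> independent e Tset ->
  monotone f -> submodular f -> f set0 = 0 -> 0 < beta ->
  forall i, (i <= size s)%N -> exists Tc D,
    Inv e f s beta k Tset i (foldl (pg_step e f s beta) (set0, set0) (take i s)) Tc D.
Proof.
move=> hu hall hsym hk hT hm hs f0 hb; elim => [|i IH] hi.
  exists (fun _ => set0), 0; rewrite take0 /=; split => /=.
  - exact: sub0set.
  - exact: sub0set.
  - by move=> u; rewrite sub0set.
  - by rewrite mulr0 f0.
  - have -> : (Tset :&: Pre s 0) :\: set0 = set0.
      by apply/setP => x; rewrite !inE ltn0 andbF.
    by rewrite !big_set0 mulr0 addr0 mulr0.
have [Tc [D H]] := IH (ltnW hi).
have [x0 _] : exists x0 : V, true by move: hi; case: (s) => [|x ?] //; exists x.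
rewrite (take_nth x0 hi) foldl_rcons.
move: H; case: (foldl _ _ _) => S U H.
apply: (@step_inv _ _ e f s beta k Tset hall hsym hk hT hm hs hb i _ S U Tc D) => //.
exact: index_uniq.
Qed.
Unset Implicit Arguments. Set Strict Implicit.

Theorem lemma16 (R : realFieldType) (V : finType) (e : rel V) (k : nat)
  (s : seq V) (f : {set V} -> R) (beta : R) :
  (1 <= k)%N ->
  simple_graph e ->
  vertex_ordering s ->
  inductively_k_independent e k s ->
  monotone f -> submodular f -> nonneg f -> f set0 = 0 ->
  0 < beta ->
  forall Tset : {set V}, independent e Tset ->
    f (pg_U e f s beta :|: Tset) - f (pg_U e f s beta)
      <= k%:R * (1 + beta) * (1 + beta^-1) * f (pg_out e f s beta).
Proof.
move=> hk1 [hsym hirr] [hu hall] hk hm hs hnn f0 hb Tset hT.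
rewrite /pg_U /pg_out /pg_run.
move: (run_inv hu hall hsym hk hT hm hs f0 hb (leqnn (size s))); rewrite take_size.
case: (foldl _ _ _) => S U [Tc [D [/= SU UP TcP hD hQ]]] /=.
have PT : Pre s (size s) = setT by apply/setP => x; rewrite !inE index_mem hall.
rewrite PT setIT in hQ.
have E : U :|: Tset = U :|: (Tset :\: U).
  by apply/setP => x; rewrite !inE; case: (x \in U).
rewrite E; apply: le_trans (@subadd _ _ f hm hs U (Tset :\: U)) _.
apply: le_trans hQ _.
have cle : forall u, (#|Tc u| <= k)%N.
  move=> u; apply: (hk u); last first.
    by move=> x y /(subsetP (TcP u)) /setIP [/setIP [/setIP [xT _] _] _]
                  /(subsetP (TcP u)) /setIP [/setIP [/setIP [yT _] _] _]; apply: hT.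
  apply: subset_trans (TcP u) _; apply/subsetP => x; rewrite !inE.
  by case/andP => /andP [/andP [_ ->] ->].
have HS : \sum_(u in S) #|Tc u|%:R * nu f s S u <= k%:R * f S.
  rewrite (@telesc _ _ f s hall f0 S) mulr_sumr; apply: ler_sum => u _.
  apply: ler_wpM2r; first exact: marg_ge0.
  by rewrite ler_nat.
have HD : D <= f S / beta by rewrite ler_pdivlMr // mulrC.
have -> : k%:R * (1 + beta) * (1 + beta^-1) * f S =
          (1 + beta) * (k%:R * (f S / beta) + k%:R * f S) by ring.
apply: ler_wpM2l; first by lra.
apply: lerD => //; apply: ler_wpM2l => //; exact: ler0n.
Qed.
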